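(* Let $L$ be a finite-dimensional non-nilpotent Lie algebra over a field $F$, and suppose $U$ is a nonzero proper strongly self-centralizing subalgebra of $L$. Then: (1) $\mathrm{nil}_L(x)=U$ for all $0\neq x\in U$; (2) $\Gamma_{\mathfrak{N}}(L)$ is disconnected; (3) if $F$ is finite, then $|N(L)|-1\le\omega(\Gamma_{\mathfrak{N}}(L))$.
   Context: A subalgebra $U$ of $L$ is strongly self-centralizing if $C_L(x)=U$ for all $0\neq x\in U$, where $C_L(x)=\{y\in L\mid [x,y]=0\}$. $\langle a,b\rangle$ denotes the Lie subalgebra generated by $a,b$; $\mathrm{nil}_L(h)=\{x\in L\mid \langle h,x\rangle \text{ is nilpotent}\}$ and $\mathrm{nil}(L)=\{x\in L\mid \langle h,x\rangle \text{ is nilpotent for all } h\in L\}$. The nilpotent graph $\Gamma_{\mathfrak{N}}(L)$ is the simple undirected graph with vertex set $L\setminus\mathrm{nil}(L)$ in which distinct vertices $x,y$ are adjacent iff $\langle x,y\rangle$ is nilpotent. $\omega(\Gamma)$ is the clique number of $\Gamma$, and $N(L)$ is the nilradical (largest nilpotent ideal) of $L$. *)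

(* Defs.v *)
From HB Require Import structures.
From mathcomp Require Import all_boot all_order all_algebra.
Set Implicit Arguments. Unset Strict Implicit. Unset Printing Implicit Defensive.
Import GRing.Theory.
Local Open Scope ring_scope.

Record lie_bracket (F : fieldType) (L : vectType F) := LieBracket {
  br : L -> L -> L;
  br_linl : forall (a : F) (x y z : L), br (a *: x + y) z = a *: br x z + br y z;
  br_linr : forall (a : F) (x y z : L), br z (a *: x + y) = a *: br z x + br z y;
  br_alt : forall x : L, br x x = 0;
  br_jacobi : forall x y z : L,
    br x (br y z) + br y (br z x) + br z (br x y) = 0
}.

Section Lie.
Variables (F : fieldType) (L : vectType F) (B : lie_bracket L).
Local Notation "[ x , y ]" := (br B x y).

Definition lset := L -> Prop.

Definition is_subalg (U : {vspace L}) : Prop :=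
  forall x y, x \in U -> y \in U -> [x, y] \in U.

Definition is_ideal (U : {vspace L}) : Prop :=
  forall x y, y \in U -> [x, y] \in U.

Definition lspan (A : lset) : lset :=
  fun x => forall V : {vspace L}, (forall y, A y -> y \in V) -> x \in V.

Definition gen2 (a b : L) : lset :=
  fun x => forall S : {vspace L}, is_subalg S -> a \in S -> b \in S -> x \in S.

Fixpoint lcs (A : lset) (k : nat) : lset :=
  match k with
  | 0 => A
  | k'.+1 => lspan (fun z => exists x y, A x /\ lcs A k' y /\ z = [x, y])
  end.

Definition nilpotent (A : lset) : Prop :=
  exists k, forall x, lcs A k x -> x = 0.

Definition vset (U : {vspace L}) : lset := fun x => x \in U.

Definition lie_nilpotent : Prop := nilpotent (fun _ => True).

Definition centralizer (x : L) : lset := fun y => [x, y] = 0.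

Definition strongly_self_centralizing (U : {vspace L}) : Prop :=
  forall x, x \in U -> x != 0 -> forall y, centralizer x y <-> y \in U.

Definition nil_L (h : L) : lset := fun x => nilpotent (gen2 h x).

Definition nil_all : lset := fun x => forall h, nilpotent (gen2 h x).

Definition ngraph_vertex (x : L) : Prop := ~ nil_all x.

Definition ngraph_adj (x y : L) : Prop :=
  [/\ ngraph_vertex x, ngraph_vertex y, x <> y & nilpotent (gen2 x y)].

Inductive ngraph_reach (x : L) : L -> Prop :=
  | reach_refl : ngraph_vertex x -> ngraph_reach x x
  | reach_step : forall y z, ngraph_reach x y -> ngraph_adj y z -> ngraph_reach x z.

Definition ngraph_connected : Prop :=
  forall x y, ngraph_vertex x -> ngraph_vertex y -> ngraph_reach x y.

Definition ngraph_disconnected : Prop := ~ ngraph_connected.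

Definition ngraph_clique (s : seq L) : Prop :=
  uniq s /\ (forall x, x \in s -> ngraph_vertex x) /\
  (forall x y, x \in s -> y \in s -> x != y -> ngraph_adj x y).

Definition is_clique_number (n : nat) : Prop :=
  (exists s, ngraph_clique s /\ size s = n) /\
  (forall s, ngraph_clique s -> (size s <= n)%N).

Definition is_nilradical (I : {vspace L}) : Prop :=
  [/\ is_ideal I, nilpotent (vset I) &
      forall J : {vspace L}, is_ideal J -> nilpotent (vset J) -> (J <= I)%VS].

Definition nilradical : lset := fun x => exists I, is_nilradical I /\ x \in I.

End Lie.

Definition is_card (T : eqType) (A : T -> Prop) (m : nat) : Prop :=
  exists s : seq T, [/\ uniq s, size s = m & forall x, x \in s <-> A x].

Definition finite_type (T : eqType) : Prop := exists s : seq T, forall x, x \in s.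

(* Main.v *)
Require Import Defs.
From mathcomp Require Import all_boot all_order all_algebra.
From mathcomp Require Import zify.
From Stdlib Require Import Classical.
Set Implicit Arguments. Unset Strict Implicit. Unset Printing Implicit Defensive.
Import GRing.Theory.
Local Open Scope ring_scope.

Section Helpers.
Variables (F : fieldType) (L : vectType F) (B : lie_bracket L).

Lemma brDl (x y z : L) : br B (x + y) z = br B x z + br B y z.
Proof. by have := br_linl B 1 x y z; rewrite !scale1r. Qed.
Lemma brDr (x y z : L) : br B z (x + y) = br B z x + br B z y.
Proof. by have := br_linr B 1 x y z; rewrite !scale1r. Qed.
Lemma br0l (z : L) : br B 0 z = 0.
Proof. have h := brDl 0 0 z; rewrite addr0 -[LHS]addr0 in h; by move/addrI: h => <-. Qed.
Lemma br0r (z : L) : br B z 0 = 0.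
Proof. have h := brDr 0 0 z; rewrite addr0 -[LHS]addr0 in h; by move/addrI: h => <-. Qed.
Lemma brZl a (x z : L) : br B (a *: x) z = a *: br B x z.
Proof. by have := br_linl B a x 0 z; rewrite addr0 br0l addr0. Qed.
Lemma brZr a (x z : L) : br B z (a *: x) = a *: br B z x.
Proof. by have := br_linr B a x 0 z; rewrite addr0 br0r addr0. Qed.
Lemma brN (y z : L) : br B y z = - br B z y.
Proof.
have h := br_alt B (y + z).
rewrite brDl !brDr !br_alt add0r addr0 in h.
by apply/eqP; rewrite -addr_eq0 h.
Qed.

Lemma lcs_mono (A A' : lset L) : (forall v, A v -> A' v) ->
  forall k v, lcs B A k v -> lcs B A' k v.
Proof.
move=> hA; elim=> [|k IH] v /=; first exact: hA.
move=> hv V hV; apply: hv => z [a [b [ha [hb ->]]]].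
by apply: hV; exists a, b; split; [apply: hA | split; [apply: IH|]].
Qed.

Lemma nilp_mono (A A' : lset L) : (forall v, A v -> A' v) ->
  nilpotent B A' -> nilpotent B A.
Proof. move=> hA [k hk]; exists k => v hv; apply: hk; exact: lcs_mono hv. Qed.

Lemma gen2_sym a b v : gen2 B a b v -> gen2 B b a v.
Proof. by move=> h S hS hb ha; apply: h. Qed.

Lemma gen2_in (S : {vspace L}) a b v : is_subalg B S -> a \in S -> b \in S ->
  gen2 B a b v -> v \in S.
Proof. by move=> hS ha hb h; apply: h. Qed.

Lemma nilp_abelian (S : {vspace L}) a b : is_subalg B S ->
  (forall u w, u \in S -> w \in S -> br B u w = 0) -> a \in S -> b \in S ->
  nilpotent B (gen2 B a b).
Proof.
move=> hS hab ha hb; exists 1%N => v /= hv; apply/eqP; rewrite -memv0.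
apply: hv => z [u [w [hu [hw ->]]]].
by rewrite (hab u w) ?mem0v //; apply: (gen2_in hS ha hb).
Qed.

Lemma nil_all0 : nil_all B 0.
Proof.
move=> h; apply: (@nilp_abelian <[h]>%VS); last 2 first.
- exact: memv_line.
- exact: mem0v.
- move=> u w /vlineP[a ->] /vlineP[b ->]; by rewrite brZl brZr br_alt !scaler0 mem0v.
- by move=> u w /vlineP[a ->] /vlineP[b ->]; rewrite brZl brZr br_alt !scaler0.
Qed.

Lemma nilp_center x y : x != 0 -> nilpotent B (gen2 B x y) ->
  exists z, [/\ z != 0, br B x z = 0 & br B y z = 0].
Proof.
move=> hx [k hk].
set N := gen2 B x y.
have xN : N x by move=> S _ h _.
have yN : N y by move=> S _ _ h.
suff [j [z [hz hz0 hj]]] : exists j z, [/\ lcs B N j z, z != 0 &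
    forall v, lcs B N j.+1 v -> v = 0].
  exists z; split => //; apply: hj => V hV; apply: hV.
    by exists x, z.
  by exists y, z.
elim: k hk => [|k IH] hk; first by move: hx; rewrite (hk x xN) eqxx.
case: (classic (forall v, lcs B N k v -> v = 0)) => [h|]; first exact: IH.
move=> hn; have [z hz'] := not_all_ex_not _ _ hn.
have [hz hz0] := imply_to_and _ _ hz'.
by exists k, z; split => //; apply/eqP.
Qed.

Variable U : {vspace L}.
Hypotheses (hsub : is_subalg B U) (hU0 : (U != 0)%VS) (hUf : U != fullv)
  (hssc : strongly_self_centralizing B U).

Lemma U_abel u w : u \in U -> w \in U -> br B u w = 0.
Proof.
move=> hu hw; case: (eqVneq u 0) => [->|hu0]; first exact: br0l.
by apply/(hssc hu hu0 w).
Qed.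

Lemma part1 x : x \in U -> x != 0 -> forall y, nil_L B x y <-> y \in U.
Proof.
move=> hx hx0 y; split.
  move=> /(nilp_center hx0) [z [hz0 hxz hyz]].
  have zU : z \in U by apply/(hssc hx hx0 z).
  apply/(hssc zU hz0 y); rewrite /centralizer brN hyz; exact: oppr0.
move=> hy; exact: (nilp_abelian hsub U_abel hx hy).
Qed.

Definition u0 := vpick U.
Lemma u0U : u0 \in U. Proof. exact: memv_pick. Qed.
Lemma u0n0 : u0 != 0. Proof. by rewrite vpick0. Qed.

Lemma nil_all_in x : nil_all B x -> x \in U.
Proof. by move=> h; apply/(part1 u0U u0n0); apply: h. Qed.

Lemma nil_all_zero x : nil_all B x -> x = 0.
Proof.
move=> h; apply/eqP; apply: contraNT hUf => hx0.
have xU := nil_all_in h.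
rewrite eqEsubv subvf /=; apply/subvP => v _.
apply/(part1 xU hx0); apply: (nilp_mono (@gen2_sym x v)); exact: h.
Qed.

Lemma vertex_nz x : x != 0 -> ngraph_vertex B x.
Proof. by move=> hx h; move: hx; rewrite (nil_all_zero h) eqxx. Qed.

Lemma vertex_nz' x : ngraph_vertex B x -> x != 0.
Proof. by move=> hv; apply/eqP => e; apply: hv; rewrite e; exact: nil_all0. Qed.

Lemma part2 : ngraph_disconnected B.
Proof.
move=> hc.
have [w hw] : exists w, w \notin U.
  apply: NNPP => hn; move: hUf; rewrite eqEsubv subvf /= => /negP; apply.
  apply/subvP => v _; apply: NNPP => hv; apply: hn; by exists v; apply/negP.
have w0 : w != 0 by apply/eqP => e; move: hw; rewrite e mem0v.
have := hc u0 w (vertex_nz u0n0) (vertex_nz w0).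
suff H : forall z, ngraph_reach B u0 z -> z \in U by move/H; rewrite (negbTE hw).
move=> z; elim => [_|a b _ aU [va vb _ hab]]; first exact: u0U.
exact/(part1 aU (vertex_nz' va)).
Qed.

Lemma part3 m n : is_card (nilradical B) m -> is_clique_number B n -> (m - 1 <= n)%N.
Proof.
move=> [s [us sz hs]] [_ hcl].
set t := [seq x <- s | x != 0].
have : (size t <= n)%N.
  apply: hcl; split; first exact: filter_uniq.
  split; first by move=> x; rewrite mem_filter => /andP[hx _]; exact: vertex_nz.
  move=> x y; rewrite !mem_filter => /andP[hx xs] /andP[hy ys] hxy.
  split; [exact: vertex_nz|exact: vertex_nz|exact/eqP|].
  move: xs ys => /hs [I [[hI nI mI] xI]] /hs [J [[hJ nJ mJ] yJ]].
  have xJ : x \in J by apply: (subvP (mJ I hI nI)).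
  apply: (nilp_mono _ nJ) => v hv; apply: (gen2_in _ xJ yJ hv).
  by move=> a b _ hb; apply: hJ.
have hc : (count (predC (fun x : L => x != 0%R)) s <= 1)%N.
  rewrite (@eq_count _ _ (pred1 (0:L))); last by move=> x /=; rewrite negbK.
  by rewrite count_uniq_mem //; case: ((0:L) \in s).
have := count_predC (fun x : L => x != 0%R) s.
rewrite -size_filter -/t sz => <-; move: hc; move: (count _ s) (size t) => a b; lia.
Qed.

End Helpers.

Theorem theorem6p6 (F : fieldType) (L : vectType F) (B : lie_bracket L)
  (U : {vspace L}) :
  ~ lie_nilpotent B ->
  is_subalg B U -> (U != 0)%VS -> U != fullv ->
  strongly_self_centralizing B U ->
  [/\ (forall x, x \in U -> x != 0 -> forall y, nil_L B x y <-> y \in U),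
      ngraph_disconnected B &
      (finite_type F -> forall m n : nat,
         is_card (nilradical B) m -> is_clique_number B n -> (m - 1 <= n)%N)].
Proof.
move=> _ hs h0 hf hc; split.
- exact: part1.
- exact: (part2 hs h0 hf hc).
- move=> _ m n; exact: (part3 hs h0 hf hc).
Qed.
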